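(* A real symmetric matrix $A$ has tropical rank one if and only if it has symmetric tropical rank one.
   Context: For an $r\times r$ submatrix of a real matrix $A$ with row index set $I$ and column index set $J$, each bijection $\rho:I\to J$ has value $\sum_{i\in I}A_{i,\rho(i)}$; the submatrix is tropically singular if the minimum value is attained by at least two distinct bijections. For symmetric $A$, the submatrix is symmetrically tropically singular if the minimum is attained by at least two distinct monomials $\prod_{i\in I}X_{i,\rho(i)}$, where variables are subject to the identification $X_{i,j}=X_{j,i}$. The tropical rank (resp. symmetric tropical rank) of $A$ is the largest $r$ such that $A$ has an $r\times r$ submatrix (arbitrary row and column sets) that is not tropically singular (resp. not symmetrically tropically singular). *)

(* Defs.v *)
From HB Require Import structures.
From mathcomp Require Import all_boot all_order all_fingroup all_algebra.
From mathcomp Require Import reals.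
Set Implicit Arguments. Unset Strict Implicit. Unset Printing Implicit Defensive.
Import Order.TTheory GRing.Theory Num.Theory.

Section Trop.
Variable R : realType.
Variable n : nat.
Variable A : 'M[R]_n.

(* An r x r submatrix is given by injective row/column enumerations
   f, g : 'I_r -> 'I_n (row set I = image f, column set J = image g).
   Bijections rho : I -> J correspond to permutations s of 'I_r via
   rho (f i) = g (s i). *)
Definition tval r (f g : 'I_r -> 'I_n) (s : 'S_r) : R :=
  (\sum_(i < r) A (f i) (g (s i)))%R.

Definition trop_singular r (f g : 'I_r -> 'I_n) : bool :=
  [exists s1 : 'S_r, exists s2 : 'S_r,
     (s1 != s2) && [forall t : 'S_r,
        (tval f g s1 <= tval f g t)%R && (tval f g s2 <= tval f g t)%R]].

(* The monomial prod_{i in I} X_{i, rho i} modulo X_{a,b} = X_{b,a}: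
   the multiset of unordered pairs {i, rho i}, encoded by the multiplicity
   of each (unordered) pair {a,b}. *)
Definition tmono r (f g : 'I_r -> 'I_n) (s : 'S_r) : {ffun 'I_n * 'I_n -> nat} :=
  [ffun p : 'I_n * 'I_n => #|[set i : 'I_r |
      ((f i == p.1) && (g (s i) == p.2)) || ((f i == p.2) && (g (s i) == p.1))]|].

Definition sym_trop_singular r (f g : 'I_r -> 'I_n) : bool :=
  [exists s1 : 'S_r, exists s2 : 'S_r,
     (tmono f g s1 != tmono f g s2) && [forall t : 'S_r,
        (tval f g s1 <= tval f g t)%R && (tval f g s2 <= tval f g t)%R]].

Definition has_nonsing r : bool :=
  [exists f : {ffun 'I_r -> 'I_n}, exists g : {ffun 'I_r -> 'I_n},
     [&& injectiveb f, injectiveb g & ~~ trop_singular f g]].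

Definition has_sym_nonsing r : bool :=
  [exists f : {ffun 'I_r -> 'I_n}, exists g : {ffun 'I_r -> 'I_n},
     [&& injectiveb f, injectiveb g & ~~ sym_trop_singular f g]].

Definition trop_rank : nat := \max_(r < n.+1 | has_nonsing r) r.
Definition sym_trop_rank : nat := \max_(r < n.+1 | has_sym_nonsing r) r.

End Trop.

(* Main.v *)
Require Import Defs.
From HB Require Import structures.
From mathcomp Require Import all_boot all_order all_fingroup all_algebra.
From mathcomp Require Import reals.
Set Implicit Arguments. Unset Strict Implicit. Unset Printing Implicit Defensive.
Import Order.TTheory GRing.Theory Num.Theory.

Lemma rank1P (n : nat) (P : pred nat) : (0 < n -> P 1) ->
  ((\max_(r < n.+1 | P r) r = 1) <-> (0 < n /\ forall r : 'I_n.+1, P r -> r <= 1)).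
Proof.
move=> P1; split.
- move=> H; have n0 : 0 < n.
    case: n P1 H => // P1 H.
    have : \max_(r < 1 | P r) r <= 0 by apply/bigmax_leqP => i _; rewrite (ord1 i).
    by rewrite H.
  split=> // r Pr; rewrite -H; exact: (@leq_bigmax_cond _ (fun r : 'I_n.+1 => P r) (fun r => nat_of_ord r) r Pr).
- case=> n0 H; apply/anti_leq/andP; split.
    by apply/bigmax_leqP => i Pi; apply: H.
  have h1 : 1 < n.+1 by [].
  exact: (@leq_bigmax_cond _ (fun r : 'I_n.+1 => P r) (fun r => nat_of_ord r) (Ordinal h1) (P1 n0)).
Qed.

Lemma S1_eq (s1 s2 : 'S_1) : s1 = s2.
Proof. by apply/permP => i; rewrite (ord1 (s1 i)) (ord1 (s2 i)). Qed.

Lemma has_nonsing1 (R : realType) (n : nat) (A : 'M[R]_n) : 0 < n -> has_nonsing A 1.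
Proof.
move=> n0; apply/existsP; exists [ffun _ => Ordinal n0]; apply/existsP; exists [ffun _ => Ordinal n0].
apply/and3P; split; try by apply/injectiveP => x y _; rewrite (ord1 x) (ord1 y).
apply/negP => /existsP [s1 /existsP [s2 /andP [ne _]]].
by rewrite (S1_eq s1 s2) eqxx in ne.
Qed.

Lemma has_sym_nonsing1 (R : realType) (n : nat) (A : 'M[R]_n) : 0 < n -> has_sym_nonsing A 1.
Proof.
move=> n0; apply/existsP; exists [ffun _ => Ordinal n0]; apply/existsP; exists [ffun _ => Ordinal n0].
apply/and3P; split; try by apply/injectiveP => x y _; rewrite (ord1 x) (ord1 y).
apply/negP => /existsP [s1 /existsP [s2 /andP [ne _]]].
by rewrite (S1_eq s1 s2) eqxx in ne.
Qed.

Lemma nonsing_sym (R : realType) (n : nat) (A : 'M[R]_n) r :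
  has_nonsing A r -> has_sym_nonsing A r.
Proof.
move=> /existsP [f /existsP [g /and3P [fi gi ns]]].
apply/existsP; exists f; apply/existsP; exists g; apply/and3P; split => //.
apply: contra ns => /existsP [s1 /existsP [s2 /andP [ne H]]].
apply/existsP; exists s1; apply/existsP; exists s2; rewrite H andbT.
by apply: contra ne => /eqP ->.
Qed.

Lemma S2_cases (s : 'S_2) : s = 1%g \/ s = tperm ord0 ord_max.
Proof.
have s01 : s ord0 != s ord_max by rewrite (inj_eq perm_inj).
case E0: (s ord0 == ord0).
- left; apply/permP => i; rewrite perm1.
  case: i => [[|[|//]] Hi].
  + have -> : Ordinal Hi = ord0 by apply: val_inj.
    exact: (eqP E0).
  + move: s01; rewrite (eqP E0) => s01.
    have -> : Ordinal Hi = ord_max by apply: val_inj.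
    apply/eqP; move: s01; case: (s ord_max) => [[|[|//]] ?] //=.
- right; apply/permP => i.
  have Hs0 : s ord0 = ord_max.
    move: E0; case: (s ord0) => [[|[|//]] ?] // _; exact: val_inj.
  have Hs1 : s ord_max = ord0.
    move: s01; rewrite Hs0; case: (s ord_max) => [[|[|//]] ?] // _; exact: val_inj.
  case: i => [[|[|//]] Hi].
  + have -> : Ordinal Hi = ord0 by apply: val_inj.
    by rewrite Hs0 tpermL.
  + have -> : Ordinal Hi = ord_max by apply: val_inj.
    by rewrite Hs1 tpermR.
Qed.

Lemma two_by_two (R : realType) (n : nat) (A : 'M[R]_n) : ~~ has_nonsing A 2 ->
  forall i k j l, i != k -> j != l -> (A i j + A k l = A i l + A k j)%R.
Proof.
move=> H i k j l ik jl.
pose f := [ffun x : 'I_2 => if x == ord0 then i else k].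
pose g := [ffun x : 'I_2 => if x == ord0 then j else l].
have inj2 : forall (a b : 'I_n), a != b ->
    injectiveb [ffun x : 'I_2 => if x == ord0 then a else b].
  move=> a b ab; apply/injectiveP => x y; rewrite !ffunE.
  case: x => [[|[|//]] Hx]; case: y => [[|[|//]] Hy] //=; try (by move=> _; apply: val_inj).
  + by move=> E; rewrite E eqxx in ab.
  + by move=> E; rewrite E eqxx in ab.
have ts : trop_singular A f g.
  apply: contraNT H => ts; apply/existsP; exists f; apply/existsP; exists g.
  by rewrite inj2 // inj2.
move/existsP: ts => [s1 /existsP [s2 /andP [ne /forallP H2]]].
have v1 : Defs.tval A f g 1%g = (A i j + A k l)%R.
  by rewrite /Defs.tval big_ord_recl big_ord1 !perm1 !ffunE /=.
have v2 : Defs.tval A f g (tperm ord0 ord_max) = (A i l + A k j)%R.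
  rewrite /Defs.tval big_ord_recl big_ord1 /=.
  have -> : lift ord0 ord0 = ord_max :> 'I_2 by apply: val_inj.
  by rewrite tpermL tpermR !ffunE.
have key : forall a b : 'S_2, a != b -> a = 1%g \/ b = 1%g.
  move=> a b; case: (S2_cases a) => ->; first by left.
  case: (S2_cases b) => -> //; [by right|by rewrite eqxx].
have e12 : Defs.tval A f g s1 = Defs.tval A f g s2.
  apply/eqP; rewrite eq_le; case/andP: (H2 s2) => -> _; by case/andP: (H2 s1) => _ ->.
have m1 : forall t, (Defs.tval A f g s1 <= Defs.tval A f g t)%R.
  by move=> t; case/andP: (H2 t).
case: (S2_cases s1) => E1; case: (S2_cases s2) => E2; rewrite E1 E2 in ne e12; 
  try by rewrite eqxx in ne.
- by rewrite -v1 -v2 e12.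
- by rewrite -v1 -v2 e12.
Qed.

Lemma tval_const (R : realType) (n : nat) (A : 'M[R]_n) (x0 : 'I_n) :
  (forall i k j l, i != k -> j != l -> (A i j + A k l = A i l + A k j)%R) ->
  forall r (f g : 'I_r -> 'I_n) (s : 'S_r), Defs.tval A f g s = Defs.tval A f g 1%g.
Proof.
move=> H.
have dec : forall x y, A x y = ((A x x0 - A x0 x0) + A x0 y)%R.
  move=> x y; case: (eqVneq x x0) => [->|xx]; first by rewrite subrr add0r.
  case: (eqVneq y x0) => [->|yy]; first by rewrite subrK.
  have := H x x0 y x0 xx yy; move=> E; apply: (addIr (A x0 x0)).
  by rewrite E addrAC subrK addrC.
move=> r f g s; rewrite /Defs.tval.
rewrite (eq_bigr (fun i => ((A (f i) x0 - A x0 x0) + A x0 (g (s i)))%R)); last by move=> i _; apply: dec.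
rewrite [in RHS](eq_bigr (fun i => ((A (f i) x0 - A x0 x0) + A x0 (g i))%R)); last by move=> i _; rewrite perm1 dec.
rewrite !big_split /=; congr (_ + _)%R.
by rewrite [in RHS](reindex_inj (@perm_inj _ s)).
Qed.

Lemma tmono_neq (n : nat) r (f g : 'I_r -> 'I_n) (a b : 'I_r) :
  injective f -> injective g -> a != b ->
  tmono f g 1%g != tmono f g (tperm a b).
Proof.
move=> fi gi ab; apply/negP => /eqP /ffunP /(_ (f a, g a)); rewrite !ffunE /=.
set S1 := [set _ | _]; set S2 := [set _ | _].
have : S2 \proper S1.
  apply/properP; split.
    apply/subsetP => i; rewrite !inE perm1.
    case: (eqVneq i a) => [->|ia]; first by rewrite !eqxx.
    case: (eqVneq i b) => [->|ib].
      rewrite tpermR (inj_eq fi) eq_sym (negbTE ab) /=.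
      case/andP => /eqP E1 /eqP E2; move: E1; rewrite E2 => /fi /eqP.
      by rewrite eq_sym (negbTE ab).
    by rewrite tpermD // eq_sym.
  exists a; first by rewrite !inE perm1 !eqxx.
  rewrite !inE tpermL (inj_eq gi) eq_sym (negbTE ab) /=.
  rewrite andbF /=; apply/negP => /andP [/eqP E1 /eqP E2].
  by move: E2; rewrite E1 => /gi /eqP; rewrite eq_sym (negbTE ab).
by move/proper_card; rewrite ltn_neqAle => /andP [/eqP + _] E; rewrite E.
Qed.

Theorem proposition2 (R : realType) (n : nat) (A : 'M[R]_n) :
  (A^T)%R = A -> (trop_rank A = 1%N <-> sym_trop_rank A = 1%N).
Proof.
move=> _; rewrite /trop_rank /sym_trop_rank.
rewrite (rank1P (has_nonsing1 A)) (rank1P (has_sym_nonsing1 A)).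
split; case=> n0 H; split=> // r; last by move=> h; apply: H; apply: nonsing_sym.
move=> /existsP [f /existsP [g /and3P [/injectiveP fi /injectiveP gi ns]]].
rewrite leqNgt; apply/negP => r2.
have rn : r <= n by have := leq_card _ fi; rewrite !card_ord.
have n2 : 2 < n.+1 by rewrite ltnS; apply: leq_trans rn.
have nn2 : ~~ has_nonsing A 2 by apply/negP => h; have := H (Ordinal n2) h.
have T := tval_const (Ordinal n0) (two_by_two nn2).
have r0 : 0 < r by apply: ltn_trans r2.
move/negP: ns; apply; apply/existsP; exists 1%g; apply/existsP; exists (tperm (Ordinal r0) (Ordinal r2)).
rewrite tmono_neq //; apply/forallP => t.
by rewrite (T _ _ _ t) (T _ _ _ (tperm _ _)) lexx.
Qed.
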